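(* Suppose that $F$ is a good configuration, that $S_1$ and $S_2$ are two small squares of the tiling of $S$, and that $\mathcal P$ and $\mathcal P'$ are two point sets in $S$ belonging to $F$. If there is no edge in $G_{S,k}(\mathcal P)$ from any vertex in $S_1$ to any vertex in $S_2$, then there is no edge in $G_{S,k(1-\varepsilon)}(\mathcal P')$ from any vertex in $S_1$ to any vertex in $S_2$.
   Context: Fix $0<\varepsilon<\frac12$, a constant $M\ge 40$, an integer $N$ divisible by $21$ and sufficiently large in terms of $\varepsilon$ and $M$, and a positive integer $k$. Let $S=[-\frac12M\sqrt k,\frac12M\sqrt k]^2$, tiled by $(MN)^2$ closed-open small squares of side $\ell=\sqrt k/N$. For a finite point set $\mathcal P\subset S$ and integer $j$, $G_{S,j}(\mathcal P)$ is the undirected graph on $\mathcal P$ in which $x,y$ are adjacent if $y$ is one of the $j$ nearest neighbours of $x$ in $\mathcal P$ or vice versa; $G_{S,k(1-\varepsilon)}$ uses $k(1-\varepsilon)$ nearest neighbours (rounded down). For a small square $S_i$ containing $r$ points of $\mathcal P$, set $d(S_i)=0$ if $r=0$, $d(S_i)=\lceil N^3r/k\rceil/N$ if $1\le r\le k$, and $d(S_i)=\infty$ if $r>k$. The labelling $S_i\mapsto d(S_i)$ is a configuration $F$, and $\mathcal P$ belongs to $F$. Let $\Sigma$ be the set of circles whose centres are centres of small squares and which pass through the centre of at least one other small square; for $\Gamma\in\Sigma$ let $R_\Gamma$ be the set of small squares lying entirely within distance $\frac52\ell\sqrt2$ of $\Gamma$. $F$ is of Type A if some $S_i$ has $d(S_i)>N^2/21$;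 of Type B if for some $\Gamma\in\Sigma$, $\frac{k}{N^2}\sum_{S_i\in R_\Gamma} d(S_i)\ge \frac{\varepsilon k}{2}$. $F$ is good if it is of neither type. *)

(* Defs.v *)
From HB Require Import structures.
From mathcomp Require Import all_boot all_order all_algebra.
From mathcomp Require Import finmap boolp reals.
Import Order.TTheory GRing.Theory Num.Theory.
Local Open Scope fset_scope.
Local Open Scope ring_scope.

Definition pt (R : realType) := (R * R)%type.

Definition dist (R : realType) (x y : pt R) : R :=
  Num.sqrt ((x.1 - y.1) ^+ 2 + (x.2 - y.2) ^+ 2).

(* y is one of the j nearest neighbours of x in P: y is a point of P other
   than x, and fewer than j points of P (other than x) are strictly closer
   to x than y is. *)
Definition is_nn (R : realType) (j : nat) (P : {fset pt R}) (x y : pt R) : bool :=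
  let closer := [fset z in P | (z != x) && (dist R x z < dist R x y)] in
  [&& y \in P, y != x & (#|` closer| < j)%N].

Definition knn_adj (R : realType) (j : nat) (P : {fset pt R}) (x y : pt R) : bool :=
  [&& x \in P, y \in P & is_nn R j P x y || is_nn R j P y x].

(* half side of S = [-M sqrt k / 2, M sqrt k / 2]^2 *)
Definition half_side (R : realType) (M k : nat) : R := M%:R * Num.sqrt k%:R / 2.
Definition ell (R : realType) (N k : nat) : R := Num.sqrt k%:R / N%:R.

Definition in_S (R : realType) (M k : nat) (p : pt R) : bool :=
  [&& - half_side R M k <= p.1 <= half_side R M k &
      - half_side R M k <= p.2 <= half_side R M k].

(* coordinate t lies in the i-th closed-open strip; the last strip also
   contains its right (top) endpoint, so that the MN x MN small squares
   partition S *)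
Definition in_strip (R : realType) (M N k : nat) (i : nat) (t : R) : bool :=
  let a := - half_side R M k + i%:R * ell R N k in
  (a <= t) && ((t < a + ell R N k) || ((i.+1 == M * N)%N && (t == a + ell R N k))).

Definition sq (M N : nat) := ('I_(M * N) * 'I_(M * N))%type.

Definition in_sq (R : realType) (M N k : nat) (s : sq M N) (p : pt R) : bool :=
  in_strip R M N k s.1 p.1 && in_strip R M N k s.2 p.2.

Definition centre (R : realType) (M N k : nat) (s : sq M N) : pt R :=
  (- half_side R M k + (s.1%:R + 2^-1) * ell R N k,
   - half_side R M k + (s.2%:R + 2^-1) * ell R N k).

Definition count_sq (R : realType) (M N k : nat) (P : {fset pt R}) (s : sq M N) : nat :=
  #|` [fset p in P | in_sq R M N k s p]|.

(* the label d(S_i); None stands for infinity *)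
Definition dlabel (R : realType) (M N k : nat) (P : {fset pt R}) (s : sq M N) : option R :=
  let r := count_sq R M N k P s in
  if r == 0%N then Some 0
  else if (r <= k)%N then Some ((Num.ceil ((N ^ 3 * r)%:R / k%:R : R))%:~R / N%:R)
  else None.

Definition config (R : realType) (M N : nat) := sq M N -> option R.

Definition belongs (R : realType) (M N k : nat) (P : {fset pt R}) (F : config R M N) : Prop :=
  forall s, dlabel R M N k P s = F s.

Definition typeA (R : realType) (M N : nat) (F : config R M N) : Prop :=
  exists s, match F s with None => True | Some v => v > (N ^ 2)%:R / 21%:R end.

Definition in_closed_sq (R : realType) (M N k : nat) (s : sq M N) (p : pt R) : Prop :=
  let a := - half_side R M k + (s.1)%:R * ell R N k in
  let b := - half_side R M k + (s.2)%:R * ell R N k in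
  a <= p.1 <= a + ell R N k /\ b <= p.2 <= b + ell R N k.

Definition in_RGamma (R : realType) (M N k : nat) (c : pt R) (r : R) (s : sq M N) : Prop :=
  forall p, in_closed_sq R M N k s p ->
    exists q, dist R q c = r /\ dist R p q <= 5%:R / 2%:R * ell R N k * Num.sqrt 2%:R.

(* Sigma: circles centred at a centre of a small square s0 and passing through
   the centre of some other small square s1 *)
Definition typeB (R : realType) (M N k : nat) (eps : R) (F : config R M N) : Prop :=
  exists s0 s1 : sq M N, s0 != s1 /\
    let c := centre R M N k s0 in
    let r := dist R c (centre R M N k s1) in
    let RG := fun s => `[< in_RGamma R M N k c r s >] in
    (exists s, RG s /\ F s = None) \/
    k%:R / (N ^ 2)%:R * (\sum_(s | RG s) odflt 0 (F s)) >= eps * k%:R / 2%:R.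

Definition good (R : realType) (M N k : nat) (eps : R) (F : config R M N) : Prop :=
  ~ typeA R M N F /\ ~ typeB R M N k eps F.

Definition kdown (R : realType) (k : nat) (eps : R) : nat := Num.truncn (k%:R * (1 - eps)).

(* Main.v *)
Require Import Defs.
From HB Require Import structures.
From mathcomp Require Import all_boot all_order all_algebra.
From mathcomp Require Import finmap boolp reals.
From mathcomp Require Import ring lra.
Import Order.TTheory GRing.Theory Num.Theory.
Local Open Scope fset_scope.
Local Open Scope ring_scope.



Section Geo.
Variable R : realType.
Implicit Types x y z : pt R.

Lemma sq_le (u v : R) : 0 <= u -> 0 <= v -> u ^+ 2 <= v ^+ 2 -> u <= v.
Proof. move=> *; nra. Qed.

Lemma dist_ge0 x y : 0 <= dist R x y.
Proof. exact: sqrtr_ge0. Qed.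

Lemma dist_sq x y : dist R x y ^+ 2 = (x.1 - y.1) ^+ 2 + (x.2 - y.2) ^+ 2.
Proof. rewrite sqr_sqrtr //; apply: addr_ge0; apply: sqr_ge0. Qed.

Lemma dist_le x y (t : R) : 0 <= t -> (x.1 - y.1) ^+ 2 + (x.2 - y.2) ^+ 2 <= t ^+ 2 -> dist R x y <= t.
Proof. move=> t0 h; apply: sq_le => //; first exact: dist_ge0. by rewrite dist_sq. Qed.

Lemma distC x y : dist R x y = dist R y x.
Proof. rewrite /dist; congr Num.sqrt; ring. Qed.

Lemma distxx x : dist R x x = 0.
Proof. by rewrite /dist !subrr expr0n /= addr0 sqrtr0. Qed.

Lemma dist_tri x y z : dist R x z <= dist R x y + dist R y z.
Proof.
have h1 := dist_sq x y; have h2 := dist_sq y z; have h3 := dist_sq x z.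
have g1 := dist_ge0 x y; have g2 := dist_ge0 y z.
have cs : (x.1 - y.1) * (y.1 - z.1) + (x.2 - y.2) * (y.2 - z.2) <= dist R x y * dist R y z.
  apply: (le_trans (ler_norm _)); apply: sq_le => //.
    by rewrite mulr_ge0.
  rewrite real_normK ?num_real // exprMn.
  have := sqr_ge0 ((x.1 - y.1) * (y.2 - z.2) - (x.2 - y.2) * (y.1 - z.1)); nra.
apply: sq_le; [exact: dist_ge0| by rewrite addr_ge0 |].
nra.
Qed.


Lemma circ_near (c p : pt R) (r e : R) : 0 <= r -> 0 <= e ->
  r - e <= dist R c p -> dist R c p <= r + e ->
  exists q, dist R q c = r /\ dist R p q <= e.
Proof.
move=> r0 e0 lo hi.
have [d0|dn0] := eqVneq (dist R c p) 0.
  rewrite d0 in lo.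
  exists (c.1 + r, c.2); split.
    rewrite /dist /= subrr expr0n /= addr0 addrC addKr sqrtr_sqr ger0_norm //.
  have hd : (c.1 - p.1) ^+ 2 + (c.2 - p.2) ^+ 2 = 0 by rewrite -dist_sq d0 expr0n.
  have h1 : c.1 = p.1.
    apply/eqP; rewrite -subr_eq0 -sqrf_eq0; apply/eqP.
    have := sqr_ge0 (c.1 - p.1); have := sqr_ge0 (c.2 - p.2); lra.
  have h2 : c.2 = p.2.
    apply/eqP; rewrite -subr_eq0 -sqrf_eq0; apply/eqP.
    have := sqr_ge0 (c.1 - p.1); have := sqr_ge0 (c.2 - p.2); lra.
  apply: dist_le => //=; rewrite -h1 -h2; nra.
set d := dist R c p in lo hi dn0 *.
have dpos : 0 < d by rewrite lt0r dn0 dist_ge0.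
have hd : d ^+ 2 = (c.1 - p.1) ^+ 2 + (c.2 - p.2) ^+ 2 by rewrite dist_sq.
clearbody d.
exists (c.1 + r / d * (p.1 - c.1), c.2 + r / d * (p.2 - c.2)); split.
  have e1 : dist R (c.1 + r / d * (p.1 - c.1), c.2 + r / d * (p.2 - c.2)) c ^+ 2 = r ^+ 2.
    rewrite dist_sq /=.
    have -> : (c.1 + r / d * (p.1 - c.1) - c.1) ^+ 2 + (c.2 + r / d * (p.2 - c.2) - c.2) ^+ 2
       = (r / d) ^+ 2 * ((c.1 - p.1) ^+ 2 + (c.2 - p.2) ^+ 2) by ring.
    rewrite -hd; field; rewrite gt_eqF //.
  have g := dist_ge0 (c.1 + r / d * (p.1 - c.1), c.2 + r / d * (p.2 - c.2)) c.
  by apply/le_anti/andP; split; apply: sq_le => //; rewrite e1.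
apply: dist_le => //=.
have -> : (p.1 - (c.1 + r / d * (p.1 - c.1))) ^+ 2 + (p.2 - (c.2 + r / d * (p.2 - c.2))) ^+ 2
   = (1 - r / d) ^+ 2 * ((c.1 - p.1) ^+ 2 + (c.2 - p.2) ^+ 2) by ring.
rewrite -hd.
have -> : (1 - r / d) ^+ 2 * d ^+ 2 = (d - r) ^+ 2 by field; rewrite gt_eqF.
have h1 : 0 <= e - (d - r) by lra.
have h2 : 0 <= e + (d - r) by lra.
have := mulr_ge0 h1 h2.
have -> : (e - (d - r)) * (e + (d - r)) = e ^+ 2 - (d - r) ^+ 2 by ring.
lra.
Qed.

End Geo.


Section Sq.
Variable R : realType.
Variables M N k : nat.
Hypothesis hN : (0 < N)%N.
Hypothesis hk : (0 < k)%N.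
Hypothesis hM : (0 < M)%N.

Local Notation l := (ell R N k).
Local Notation h := (half_side R M k).
Definition sig := ell R N k * Num.sqrt 2%:R / 2%:R.

Lemma l_gt0 : 0 < l.
Proof. rewrite /ell divr_gt0 // ?ltr0n // sqrtr_gt0 ltr0n //. Qed.

Lemma h_eq : h = (M * N)%:R * l / 2.
Proof.
rewrite /half_side /ell natrM; field.
by rewrite pnatr_eq0 -lt0n.
Qed.

Lemma sig_ge0 : 0 <= sig.
Proof. rewrite /sig !mulr_ge0 ?sqrtr_ge0 ?invr_ge0 ?ler0n //; exact: ltW l_gt0. Qed.

Lemma sig_sq : sig ^+ 2 = l ^+ 2 / 2.
Proof.
rewrite /sig /ell !exprMn !sqr_sqrtr ?ler0n //; field; by rewrite pnatr_eq0 -lt0n.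
Qed.

Lemma strip_closed i t : in_strip R M N k i t ->
  - h + i%:R * l <= t <= - h + i%:R * l + l.
Proof.
rewrite /in_strip /= => /andP[-> /orP[/ltW -> //| /andP[_ /eqP ->]]].
by rewrite lexx.
Qed.

Lemma sq_closed (s : sq M N) p : in_sq R M N k s p -> in_closed_sq R M N k s p.
Proof. by case/andP=> /strip_closed h1 /strip_closed h2; split. Qed.

Lemma closed_centre (s : sq M N) p : in_closed_sq R M N k s p ->
  dist R p (centre R M N k s) <= sig.
Proof.
move=> [/andP[a1 a2] /andP[b1 b2]]; apply: dist_le; first exact: sig_ge0.
rewrite sig_sq /centre /=.
set A := - h + (s.1)%:R * l in a1 a2 *; set B := - h + (s.2)%:R * l in b1 b2 *.
have -> : - h + ((s.1)%:R + 2^-1) * l = A + l / 2 by rewrite /A; field.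
have -> : - h + ((s.2)%:R + 2^-1) * l = B + l / 2 by rewrite /B; field.
have := l_gt0. nra.
Qed.

Lemma closed_diam (s : sq M N) p w : in_closed_sq R M N k s p ->
  in_closed_sq R M N k s w -> dist R p w <= sig *+ 2.
Proof.
move=> hp hw; apply: (le_trans (dist_tri _ p (centre R M N k s) w)).
rewrite mulr2n lerD ?closed_centre // distC closed_centre //.
Qed.


Lemma strip_uniq (i j : nat) t : (i < M * N)%N -> (j < M * N)%N ->
  in_strip R M N k i t -> in_strip R M N k j t -> i = j.
Proof.
have lp := l_gt0.
wlog: i j / (i <= j)%N.
  move=> H hi hj si sj; case/orP: (leq_total i j) => hij; first exact: H.
  by apply/esym; apply: H.
rewrite leq_eqVlt => /orP[/eqP //|ij] hi hj.
rewrite /in_strip /= => /andP[_ hi'] /andP[hj' _].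
have hij : (i.+1)%:R <= j%:R :> R by rewrite ler_nat.
have : (i.+1)%:R * l <= j%:R * l by rewrite ler_pM2r.
rewrite -addn1 natrD mulrDl mul1r => H.
case/orP: hi' => [hlt|/andP[/eqP e _]]; first by exfalso; lra.
by exfalso; move: hj; rewrite -e ltnS leqNgt ij.
Qed.

Lemma strip_exists t : - h <= t <= h ->
  exists2 i : nat, (i < M * N)%N & in_strip R M N k i t.
Proof.
move=> /andP[t1 t2].
have lp := l_gt0.
have m0 : (0 < M * N)%N by rewrite muln_gt0 hM hN.
set m := (M * N)%N in m0 *.
have he : h = m%:R * l / 2 by rewrite h_eq.
set u := (t + h) / l.
have u0 : 0 <= u by rewrite /u; apply: divr_ge0; [lra | exact: ltW].
have um : u <= m%:R.
  rewrite /u ler_pdivrMr //; lra.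
have [nm|nm] := ltnP (Num.truncn u) m.
  exists (Num.truncn u) => //.
  have /andP[n1 n2] := truncn_itv u0.
  have e : t = - h + u * l by rewrite /u; field; rewrite gt_eqF.
  rewrite /in_strip /=; apply/andP; split.
    by rewrite e lerD2l ler_pM2r.
  apply/orP; left; rewrite e -addrA ltrD2l.
  have -> : (Num.truncn u)%:R * l + l = ((Num.truncn u).+1)%:R * l.
    by rewrite -addn1 natrD mulrDl mul1r.
  by rewrite ltr_pM2r.
have um' : u = m%:R.
  apply/le_anti; rewrite um /=.
  by rewrite -truncn_ge_nat.
have e : t = h.
  have : t + h = u * l by rewrite /u; field; rewrite gt_eqF.
  rewrite um' he; lra.
exists m.-1; first by rewrite prednK // leqnn ?ltnSn //; case: (m) m0.
have em : m = (m.-1).+1 by rewrite prednK.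
rewrite /in_strip /=; apply/andP; split.
  rewrite e he; move: (m.-1) em => i ->; rewrite -addn1 natrD; nra.
apply/orP; right; rewrite -em eqxx /=; apply/eqP.
rewrite e he; move: (m.-1) em => i ->; rewrite -addn1 natrD; by field.
Qed.


Lemma sq_exists p : in_S R M k p -> exists s : sq M N, in_sq R M N k s p.
Proof.
case/andP=> /strip_exists[i hi si] /strip_exists[j hj sj].
by exists (Ordinal hi, Ordinal hj); rewrite /in_sq /= si sj.
Qed.

Lemma sq_uniq (s s' : sq M N) p : in_sq R M N k s p -> in_sq R M N k s' p -> s = s'.
Proof.
case: s s' => [i j] [i' j'] /andP[/= a b] /andP[/= a' b'].
have e1 := @strip_uniq i i' _ (ltn_ord i) (ltn_ord i') a a'.
have e2 := @strip_uniq j j' _ (ltn_ord j) (ltn_ord j') b b'.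
by congr pair; apply: val_inj.
Qed.

Lemma sum_in_sq p : in_S R M k p -> (\sum_(s : sq M N) (in_sq R M N k s p : nat))%N = 1%N.
Proof.
move=> pS; have [s0 h0] := sq_exists _ pS.
rewrite (bigD1 s0) //= h0 big1 // => s /eqP ns.
by case hs: (in_sq R M N k s p) => //; case: ns; apply: sq_uniq hs h0.
Qed.

Lemma card_sep (A : {fset pt R}) (Q : pred (pt R)) :
  #|` [fset z in A | Q z]| = (\sum_(z <- A) (Q z : nat))%N.
Proof.
rewrite card_fset_sum1 -big_fset_condE big_mkcond /=.
by apply: eq_bigr => z _; case: (Q z).
Qed.

Lemma partition_card (A : {fset pt R}) : (forall p, p \in A -> in_S R M k p) ->
  #|` A| = (\sum_(s : sq M N) count_sq R M N k A s)%N.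
Proof.
move=> AS; rewrite /count_sq.
under eq_bigr => s _ do rewrite card_sep.
rewrite exchange_big /= card_fset_sum1 big_seq_cond [RHS]big_seq_cond.
by apply: eq_bigr => z /andP[zA _]; rewrite sum_in_sq // AS.
Qed.


Definition cl (r : nat) : R := (Num.ceil ((N ^ 3 * r)%:R / k%:R : R))%:~R.

Lemma cl_ge (r : nat) : (N%:R ^+ 3 * r%:R) / k%:R <= cl r.
Proof. by rewrite /cl -natrX -natrM ceil_ge. Qed.

Lemma cl_lt (r : nat) : cl r < (N%:R ^+ 3 * r%:R) / k%:R + 1.
Proof. rewrite /cl -natrX -natrM; have := ceilB1_lt ((N ^ 3 * r)%:R / k%:R : R).
rewrite intrD /=; lra. Qed.

Lemma Npos : 0 < N%:R :> R. Proof. by rewrite ltr0n. Qed.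
Lemma kpos : 0 < k%:R :> R. Proof. by rewrite ltr0n. Qed.

Lemma r_eq (r : nat) : r%:R = k%:R / N%:R ^+ 3 * ((N%:R ^+ 3 * r%:R) / k%:R) :> R.
Proof. by field; rewrite !pnatr_eq0 -!lt0n hN hk. Qed.

Lemma dlab_some (P : {fset pt R}) s (d : R) : dlabel R M N k P s = Some d ->
  (count_sq R M N k P s)%:R <= k%:R / N%:R ^+ 2 * d.
Proof.
rewrite /dlabel; set r := count_sq R M N k P s.
case: eqP => [-> [<-]|_]; first by rewrite mulr0.
case: leqP => // _ [<-].
rewrite r_eq -/(cl r).
have -> : k%:R / N%:R ^+ 2 * (cl r / N%:R) = k%:R / N%:R ^+ 3 * cl r.
  by field; rewrite !pnatr_eq0 -!lt0n ?hN ?hk.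
rewrite ler_pM2l ?cl_ge // divr_gt0 ?kpos // exprn_gt0 // Npos //.
Qed.

Lemma cl_pos (r : nat) : (0 < r)%N -> 0 < cl r / N%:R.
Proof.
move=> r0; rewrite divr_gt0 ?Npos //; apply: lt_le_trans (cl_ge r).
rewrite divr_gt0 ?kpos // mulr_gt0 ?exprn_gt0 ?Npos // ltr0n //.
Qed.

Lemma dlab_pos (P P' : {fset pt R}) s :
  dlabel R M N k P s = dlabel R M N k P' s ->
  (0 < count_sq R M N k P' s)%N -> (count_sq R M N k P' s <= k)%N ->
  (0 < count_sq R M N k P s)%N.
Proof.
rewrite /dlabel; set r := count_sq R M N k P s; set r' := count_sq R M N k P' s.
move=> e r0 rk; rewrite lt0n; apply/negP => /eqP r00; move: e.
rewrite r00 /= (negPf (lt0n_neq0 r0)) rk => -[] /esym /eqP.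
by rewrite -/(cl r') gt_eqF // cl_pos.
Qed.

Lemma dlab_err (P P' : {fset pt R}) s :
  dlabel R M N k P s = dlabel R M N k P' s ->
  (count_sq R M N k P s <= k)%N -> (count_sq R M N k P' s <= k)%N ->
  (count_sq R M N k P s)%:R <= (count_sq R M N k P' s)%:R + k%:R / N%:R ^+ 3 :> R.
Proof.
move=> e rk rk'.
have [r0|rpos] := eqVneq (count_sq R M N k P s) 0%N.
  by rewrite r0 addr_ge0 // divr_ge0 ?ler0n // exprn_ge0 // ler0n.
have r'pos : (0 < count_sq R M N k P' s)%N.
  by apply: (dlab_pos _ _ _ (esym e)); rewrite // lt0n.
move: e; rewrite /dlabel; set r := count_sq R M N k P s; set r' := count_sq R M N k P' s.
rewrite (negPf rpos) rk (negPf (lt0n_neq0 r'pos)) rk' -/(cl r) -/(cl r') => -[] e.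
have e' : cl r = cl r'.
  by move: e => /(congr1 (fun x => x * N%:R)); rewrite !divfK // gt_eqF ?Npos.
rewrite r_eq [X in _ <= X + _]r_eq.
have kN : 0 < k%:R / N%:R ^+ 3 :> R by rewrite divr_gt0 ?kpos // exprn_gt0 // Npos.
have := cl_ge r; have := cl_lt r'; rewrite e' => h1 h2.
have h3 : (N%:R ^+ 3 * r%:R) / k%:R <= (N%:R ^+ 3 * r'%:R) / k%:R + 1 :> R by lra.
have := ler_pM2l kN; move=> /(_ _ _) h4.
move: h3; rewrite -h4 mulrDr mulr1 //.
Qed.

End Sq.


Section Main.
Variable R : realType.
Variables M N k : nat.
Hypothesis hN : (0 < N)%N.
Hypothesis hk : (0 < k)%N.
Hypothesis hM : (0 < M)%N.

Lemma geo (A B s : sq M N) (x y x0 y0 z w : pt R) :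
  in_sq R M N k A x -> in_sq R M N k A x0 -> in_sq R M N k B y -> in_sq R M N k B y0 ->
  in_sq R M N k s z -> in_sq R M N k s w ->
  dist R x0 z < dist R x0 y0 -> dist R x y <= dist R x w ->
  in_RGamma R M N k (centre R M N k A) (dist R (centre R M N k A) (centre R M N k B)) s.
Proof.
move=> /sq_closed hx /sq_closed hx0 /sq_closed hy /sq_closed hy0 /sq_closed hz /sq_closed hw lt1 le1 p hp.
set c := centre R M N k A; set cB := centre R M N k B.
have -> : 5%:R / 2%:R * ell R N k * Num.sqrt 2%:R = 5%:R * sig R N k by rewrite /sig; field.
have s0 := sig_ge0 R N k.
apply: circ_near; first exact: dist_ge0.
  by rewrite mulr_ge0 ?ler0n.
- have a1 : dist R x c <= sig R N k := closed_centre _ _ _ _ hN hk _ _ hx.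
  have a2 : dist R y cB <= sig R N k := closed_centre _ _ _ _ hN hk _ _ hy.
  have a3 := closed_diam _ _ _ _ hN hk _ _ _ hp hw.
  have t1 := dist_tri R c p w; have t2 := dist_tri R x c w.
  have t3 := dist_tri R c x cB; have t4 := dist_tri R x y cB.
  have e1 := distC R c x; have e2 := distC R cB y; have e3 := distC R p w.
  rewrite mulr2n in a3. lra.
- have a1 : dist R x0 c <= sig R N k := closed_centre _ _ _ _ hN hk _ _ hx0.
  have a2 : dist R y0 cB <= sig R N k := closed_centre _ _ _ _ hN hk _ _ hy0.
  have a3 := closed_diam _ _ _ _ hN hk _ _ _ hp hz.
  have t1 := dist_tri R c x0 p; have t2 := dist_tri R x0 z p.
  have t3 := dist_tri R x0 c y0; have t4 := dist_tri R c cB y0.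
  have e1 := distC R c x0; have e2 := distC R cB y0; have e3 := distC R z p; have e4 := distC R c y0.
  rewrite mulr2n in a3. lra.
Qed.


Lemma dist_eq0 (x y : pt R) : dist R x y = 0 -> x = y.
Proof.
move=> d0; have hd : (x.1 - y.1) ^+ 2 + (x.2 - y.2) ^+ 2 = 0 by rewrite -dist_sq d0 expr0n.
have h1 : x.1 = y.1.
  apply/eqP; rewrite -subr_eq0 -sqrf_eq0; apply/eqP.
  have := sqr_ge0 (x.1 - y.1); have := sqr_ge0 (x.2 - y.2); lra.
have h2 : x.2 = y.2.
  apply/eqP; rewrite -subr_eq0 -sqrf_eq0; apply/eqP.
  have := sqr_ge0 (x.1 - y.1); have := sqr_ge0 (x.2 - y.2); lra.
by case: x y h1 h2 {d0 hd} => a b [c d] /= -> ->.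
Qed.

Lemma dist_gt0 (x y : pt R) : x != y -> 0 < dist R x y.
Proof.
move=> ne; rewrite lt0r dist_ge0 andbT; apply/eqP => /dist_eq0 e.
by rewrite e eqxx in ne.
Qed.

Lemma cnt_pos (Q : {fset pt R}) (s : sq M N) z : z \in Q -> in_sq R M N k s z ->
  (0 < count_sq R M N k Q s)%N.
Proof.
move=> zQ zs; rewrite /count_sq cardfs_gt0; apply/fset0Pn; exists z.
by rewrite !inE zQ zs.
Qed.

Lemma cnt_ex (Q : {fset pt R}) (s : sq M N) : (0 < count_sq R M N k Q s)%N ->
  exists2 z, z \in Q & in_sq R M N k s z.
Proof.
rewrite /count_sq cardfs_gt0 => /fset0Pn[z]; rewrite !inE => /andP[zQ zs].
by exists z.
Qed.

Lemma cnt_sub (Q Q' : {fset pt R}) (s : sq M N) :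
  (forall z, z \in Q -> in_sq R M N k s z -> z \in Q') ->
  (count_sq R M N k Q s <= count_sq R M N k Q' s)%N.
Proof.
move=> H; apply: fsubset_leq_card; apply/fsubsetP => z; rewrite !inE => /andP[zQ zs].
by rewrite H.
Qed.


Lemma main_dir (eps : R) (F : config R M N) (A B : sq M N) (P P' : {fset pt R}) (x y : pt R) :
  ~ typeA R M N F -> ~ typeB R M N k eps F -> A != B ->
  (forall p, p \in P -> in_S R M k p) -> (forall p, p \in P' -> in_S R M k p) ->
  belongs R M N k P F -> belongs R M N k P' F ->
  0 < eps -> eps < 1 -> (M ^ 2)%:R / N%:R <= eps / 2 ->
  x \in P' -> y \in P' -> in_sq R M N k A x -> in_sq R M N k B y ->
  is_nn R (kdown R k eps) P' x y ->
  exists x0 y0, [/\ x0 \in P, y0 \in P, in_sq R M N k A x0, in_sq R M N k B y0 & is_nn R k P x0 y0].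
Proof.
move=> nA nB AB PS P'S bP bP' e0 e1 eN xP yP xA yB nn.
have Fsome s : F s <> None by move=> Fs; apply: nA; exists s; rewrite Fs.
have cP s : (count_sq R M N k P s <= k)%N.
  have := Fsome s; rewrite -(bP s) /dlabel; case: ifP => [/eqP -> //|_]; by case: leqP.
have cP' s : (count_sq R M N k P' s <= k)%N.
  have := Fsome s; rewrite -(bP' s) /dlabel; case: ifP => [/eqP -> //|_]; by case: leqP.
have eqlab s : dlabel R M N k P s = dlabel R M N k P' s by rewrite bP bP'.
have [x0 x0P x0A] : exists2 x0, x0 \in P & in_sq R M N k A x0.
  by apply: cnt_ex; apply: (dlab_pos _ _ _ _ hN hk _ _ _ (eqlab A)) => //; apply: cnt_pos xP xA.
have [y0 y0P y0B] : exists2 y0, y0 \in P & in_sq R M N k B y0.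
  by apply: cnt_ex; apply: (dlab_pos _ _ _ _ hN hk _ _ _ (eqlab B)) => //; apply: cnt_pos yP yB.
have neq0 : y0 != x0.
  apply/eqP => e; move: AB; rewrite (sq_uniq _ _ _ _ hN hk _ _ _ x0A (_ : in_sq R M N k B x0)) ?eqxx //.
  by rewrite -e.
have neq : y != x.
  apply/eqP => e; move: AB; rewrite (sq_uniq _ _ _ _ hN hk _ _ _ xA (_ : in_sq R M N k B x)) ?eqxx //.
  by rewrite -e.
exists x0, y0; split => //.
rewrite /is_nn y0P neq0 /= ltnNge; apply/negP => Kle.
move: nn; rewrite /is_nn => /and3P[_ _ nn].
set D := [fset z in P | dist R x0 z < dist R x0 y0].
set E := [fset z in P' | dist R x z < dist R x y].
have x0D : x0 \in D by rewrite !inE x0P distxx dist_gt0 // eq_sym.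
have xE : x \in E by rewrite !inE xP distxx dist_gt0 // eq_sym.
have cD : #|` D| = (#|` [fset z in P | (z != x0) && (dist R x0 z < dist R x0 y0)]|).+1.
  rewrite (cardfsD1 x0 D) x0D; congr (_.+1); congr (#|` _|).
  by apply/fsetP => z; rewrite !inE; case: (z \in P); rewrite ?andbF.
have cE : #|` E| = (#|` [fset z in P' | (z != x) && (dist R x z < dist R x y)]|).+1.
  rewrite (cardfsD1 x E) xE; congr (_.+1); congr (#|` _|).
  by apply/fsetP => z; rewrite !inE; case: (z \in P'); rewrite ?andbF.
have KD : (k.+1 <= #|` D|)%N by rewrite cD ltnS.
have KE : (#|` E| <= kdown R k eps)%N by rewrite cE.
set c := centre R M N k A; set r := dist R c (centre R M N k B).
pose RG s := `[< in_RGamma R M N k c r s >].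
pose inn s := `[< forall w, in_sq R M N k s w -> dist R x w < dist R x y >].
set cst : R := k%:R / N%:R ^+ 3.
have cst0 : 0 <= cst by rewrite /cst divr_ge0 ?ler0n // exprn_ge0 ?ler0n.
have DS : forall p, p \in D -> in_S R M k p by move=> p; rewrite !inE => /andP[/PS].
have ES : forall p, p \in E -> in_S R M k p by move=> p; rewrite !inE => /andP[/P'S].
have per s : (count_sq R M N k D s)%:R <=
    (if RG s then (count_sq R M N k P s)%:R else 0) +
    (if inn s then (count_sq R M N k E s)%:R + cst else 0) :> R.
  have DP : (count_sq R M N k D s <= count_sq R M N k P s)%N.
    by apply: cnt_sub => z; rewrite !inE => /andP[].
  have err := dlab_err _ _ _ _ hN hk _ _ s (eqlab s) (cP s) (cP' s).
  have P'E : inn s -> (count_sq R M N k P' s <= count_sq R M N k E s)%N.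
    move=> /asboolP hi; apply: cnt_sub => z zP zs; rewrite !inE zP /=; exact: hi.
  case: ifP => hRG.
    rewrite ler_wpDr ?ler_nat //; case: ifP => // _.
    by rewrite addr_ge0 ?ler0n.
  rewrite add0r; case: ifP => hin.
    apply: (le_trans (y := (count_sq R M N k P s)%:R)); first by rewrite ler_nat.
    by apply: (le_trans err); rewrite lerD2r ler_nat P'E.
  suff h0 : count_sq R M N k D s = 0%N by rewrite h0.
  apply/eqP; rewrite -leqn0 leqNgt; apply/negP => pos.
  have /cnt_ex[z] := pos.
  rewrite !inE => /andP[zP zlt] zs.
  move/negbT: hin => /asboolPn; rewrite -existsNE => -[w].
  move=> /not_implyP[ws /negP]; rewrite -leNgt => wle.
  move: hRG => /negbT /asboolPn; apply.
  exact: (geo _ _ _ _ _ _ _ _ _ xA x0A yB y0B zs ws zlt wle).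
have sD : (#|` D|)%:R = \sum_s (count_sq R M N k D s)%:R :> R.
  by rewrite (partition_card _ _ _ _ hN hk hM D DS) natr_sum.
have sE : (#|` E|)%:R = \sum_s (count_sq R M N k E s)%:R :> R.
  by rewrite (partition_card _ _ _ _ hN hk hM E ES) natr_sum.
have tot : (#|` D|)%:R <= \sum_s (if RG s then (count_sq R M N k P s)%:R else 0)
    + \sum_s (if inn s then (count_sq R M N k E s)%:R + cst else 0) :> R.
  by rewrite sD -big_split /=; apply: ler_sum => s _; exact: per s.
have s1 : \sum_s (if RG s then (count_sq R M N k P s)%:R else 0)
    <= k%:R / N%:R ^+ 2 * \sum_(s | RG s) odflt 0 (F s) :> R.
  rewrite -big_mkcond mulr_sumr; apply: ler_sum => s _.
  case e: (F s) => [d|]; last by case: (Fsome s).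
  by apply: (dlab_some _ _ _ _ hN hk); rewrite bP e.
have TB : k%:R / N%:R ^+ 2 * \sum_(s | RG s) odflt 0 (F s) < eps * k%:R / 2%:R.
  rewrite ltNge; apply/negP => h; apply: nB; exists A, B; split => //.
  simpl; right; by rewrite natrX.
have s2 : \sum_s (if inn s then (count_sq R M N k E s)%:R + cst else 0)
    <= (#|` E|)%:R + ((M * N) * (M * N))%:R * cst :> R.
  apply: (le_trans (y := \sum_(s : sq M N) ((count_sq R M N k E s)%:R + cst))).
    apply: ler_sum => s _; case: ifP => // _; by rewrite addr_ge0 ?ler0n.
  by rewrite big_split /= -sE sumr_const card_prod card_ord mulr_natl.
have e3 : ((M * N) * (M * N))%:R * cst = (M ^ 2)%:R / N%:R * k%:R :> R.
  by rewrite /cst natrX !natrM; field; rewrite pnatr_eq0 -lt0n hN.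
have e4 : (M ^ 2)%:R / N%:R * k%:R <= eps / 2 * k%:R :> R by rewrite ler_wpM2r ?ler0n.
have hKD : k%:R + 1 <= (#|` D|)%:R :> R by rewrite natr1 ler_nat.
have hKE : (#|` E|)%:R <= k%:R * (1 - eps) :> R.
  apply: (le_trans (y := (kdown R k eps)%:R)); first by rewrite ler_nat.
  by rewrite /kdown truncn_le mulr_ge0 ?ler0n //; lra.
have k0 : 0 <= k%:R :> R by rewrite ler0n.
nra.
Qed.

End Main.

Theorem lemma8 (R : realType) (eps : R) (M : nat) :
  0 < eps -> eps < 2^-1 -> (40 <= M)%N ->
  exists N0 : nat, forall N : nat, (N0 <= N)%N -> (21 %| N)%N ->
  forall (k : nat), (0 < k)%N ->
  forall (F : config R M N), good R M N k eps F ->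
  forall (S1 S2 : sq M N), S1 != S2 ->
  forall (P P' : {fset pt R}),
    (forall p, p \in P -> in_S R M k p) ->
    (forall p, p \in P' -> in_S R M k p) ->
    belongs R M N k P F -> belongs R M N k P' F ->
    (forall x y, in_sq R M N k S1 x -> in_sq R M N k S2 y -> ~~ knn_adj R k P x y) ->
    (forall x y, in_sq R M N k S1 x -> in_sq R M N k S2 y -> ~~ knn_adj R (kdown R k eps) P' x y).

Proof.
move=> e0 e1 M40.
have hM : (0 < M)%N by apply: leq_trans M40.
exists (Num.truncn (2 * (M ^ 2)%:R / eps)).+1 => N N0 _ k hk F [nA nB] S1 S2 S12 P P' PS P'S bP bP' H x y xS1 yS2.
have hN : (0 < N)%N by apply: leq_trans N0.
have eN : (M ^ 2)%:R / N%:R <= eps / 2 :> R.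
  have Npos : 0 < N%:R :> R by rewrite ltr0n.
  have : 2 * (M ^ 2)%:R / eps < N%:R :> R.
    apply: (lt_le_trans (truncnS_gt _)); by rewrite ler_nat.
  rewrite ltr_pdivrMr // => h.
  rewrite ler_pdivrMr // mulrAC ler_pdivlMr //; lra.
have e1' : eps < 1 by lra.
apply/negP; rewrite /knn_adj => /and3P[xP yP /orP[nn|nn]].
  have [x0 [y0 [x0P y0P x0A y0B nn0]]] :=
    main_dir R M N k hN hk hM _ _ _ _ _ _ _ _ nA nB S12 PS P'S bP bP' e0 e1' eN xP yP xS1 yS2 nn.
  by move: (H x0 y0 x0A y0B); rewrite /knn_adj x0P y0P nn0.
have S21 : S2 != S1 by rewrite eq_sym.
have [y0 [x0 [y0P x0P y0B x0A nn0]]] :=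
  main_dir R M N k hN hk hM _ _ _ _ _ _ _ _ nA nB S21 PS P'S bP bP' e0 e1' eN yP xP yS2 xS1 nn.
by move: (H x0 y0 x0A y0B); rewrite /knn_adj x0P y0P nn0 orbT.
Qed.
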